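(* Let $a_1\ge a_2\ge\dots\ge a_n\ge0$, let $\delta\in(2/n,1]$ be such that $1/\delta$ is an integer, and let $\delta_1,\dots,\delta_n$ be independent random variables with $\mathbb P(\delta_j=1)=\delta$, $\mathbb P(\delta_j=0)=1-\delta$. Put $n(\delta)=e+\sum_{j=1}^n\delta_j$. Then $$\frac{\delta}{4e}\sqrt{\log(\delta n)}\sum_{j=1}^{1/\delta}a_j\ \le\ \mathbb E\Bigl(\sqrt{\log n(\delta)}\cdot\max_{1\le j\le n}\delta_ja_j\Bigr)\ \le\ 4\delta\sqrt{\log(\delta n)}\sum_{j=1}^{1/\delta}a_j.$$
   Context: $\log$ is the natural logarithm and $e$ is Euler's number. *)

(* Defs.v *)
From HB Require Import structures.
From mathcomp Require Import all_boot all_order all_algebra.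
From mathcomp Require Import all_classical all_reals all_analysis.
Set Implicit Arguments. Unset Strict Implicit. Unset Printing Implicit Defensive.
Import Order.TTheory GRing.Theory Num.Theory.
Local Open Scope ring_scope.

(* Sample space for n independent Bernoulli(d) variables delta_1..delta_n:
   outcomes w : {ffun 'I_n -> bool}, delta_{j+1}(w) = w j (as 0/1),
   with the product (independent) law. *)
Definition bern_prob {R : realType} (n : nat) (d : R) (w : {ffun 'I_n -> bool}) : R :=
  \prod_(j < n) (if w j then d else 1 - d).

Definition bern_expect {R : realType} (n : nat) (d : R)
  (X : {ffun 'I_n -> bool} -> R) : R :=
  \sum_(w : {ffun 'I_n -> bool}) bern_prob d w * X w.

Definition delta_rv {R : realType} (n : nat) (w : {ffun 'I_n -> bool}) (j : 'I_n) : R :=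
  (w j)%:R.

(* Main.v *)
Require Import Defs.
From HB Require Import structures.
From mathcomp Require Import all_boot all_order all_algebra.
From mathcomp Require Import all_classical all_reals all_analysis.
From mathcomp Require Import ring lra zify.
Import Order.TTheory GRing.Theory Num.Theory.
Set Implicit Arguments. Unset Strict Implicit. Unset Printing Implicit Defensive.
Local Open Scope ring_scope.

Definition fcons n (b : bool) (f : {ffun 'I_n -> bool}) : {ffun 'I_n.+1 -> bool} :=
  [ffun i => if unlift ord0 i is Some j then f j else b].

Lemma fcons0 n b (f : {ffun 'I_n -> bool}) : fcons b f ord0 = b.
Proof. by rewrite ffunE unlift_none. Qed.

Lemma fconsS n b (f : {ffun 'I_n -> bool}) j : fcons b f (lift ord0 j) = f j.
Proof. by rewrite ffunE liftK. Qed.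

Lemma bern_probS (R : realType) n (d : R) b (f : {ffun 'I_n -> bool}) :
  bern_prob d (fcons b f) = (if b then d else 1 - d) * bern_prob d f.
Proof.
rewrite /bern_prob big_ord_recl fcons0; congr (_ * _).
by apply: eq_bigr => j _; rewrite fconsS.
Qed.

Lemma bern_expectS (R : realType) n (d : R) X :
  bern_expect (n := n.+1) d X =
  d * bern_expect d (fun f => X (fcons true f)) +
  (1 - d) * bern_expect d (fun f => X (fcons false f)).
Proof.
rewrite /bern_expect.
pose h := fun p : bool * {ffun 'I_n -> bool} => fcons p.1 p.2.
pose g := fun w : {ffun 'I_n.+1 -> bool} => (w ord0, [ffun j => w (lift ord0 j)]).
have hb : bijective h.
  exists g.
  - case=> b f; rewrite /g /h /=; rewrite fcons0; congr (_, _).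
    by apply/ffunP => j; rewrite ffunE fconsS.
  - move=> w; rewrite /g /h /=; apply/ffunP => i; rewrite ffunE.
    by case: unliftP => [j ->|->]; rewrite ?ffunE.
rewrite (reindex h); last by apply: onW_bij.
rewrite -(pair_big xpredT xpredT (fun b f => bern_prob d (h (b, f)) * X (h (b, f)))) /=.
rewrite big_bool /= !mulr_sumr; congr (_ + _); apply: eq_bigr => f _;
  by rewrite /h /= bern_probS mulrA.
Qed.

Lemma E_ext (R : realType) n (d : R) (X Y : {ffun 'I_n -> bool} -> R) :
  (forall w, X w = Y w) -> bern_expect d X = bern_expect d Y.
Proof. by move=> h; apply: eq_bigr => w _; rewrite h. Qed.
Arguments E_ext {R n d} X Y.

Lemma E_add (R : realType) n (d : R) (X Y : {ffun 'I_n -> bool} -> R) :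
  bern_expect d (fun w => X w + Y w) = bern_expect d X + bern_expect d Y.
Proof. by rewrite /bern_expect -big_split; apply: eq_bigr => w _; rewrite mulrDr. Qed.

Lemma E_scale (R : realType) n (d : R) k (X : {ffun 'I_n -> bool} -> R) :
  bern_expect d (fun w => k * X w) = k * bern_expect d X.
Proof. by rewrite /bern_expect mulr_sumr; apply: eq_bigr => w _; rewrite mulrCA. Qed.

Lemma E_const (R : realType) n (d : R) k :
  bern_expect (n := n) d (fun _ => k) = k.
Proof.
elim: n => [|n IH].
  rewrite /bern_expect /bern_prob.
  rewrite (eq_bigr (fun _ => k)); last by move=> w _; rewrite big_ord0 mul1r.
  by rewrite sumr_const card_ffun !card_ord expn0 mulr1n.
by rewrite bern_expectS !IH; ring.
Qed.

Lemma bern_prob_ge0 (R : realType) n (d : R) (w : {ffun 'I_n -> bool}) :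
  0 <= d -> d <= 1 -> 0 <= bern_prob d w.
Proof.
move=> d0 d1; rewrite /bern_prob; apply: prodr_ge0 => j _.
by case: (w j) => //; rewrite subr_ge0.
Qed.

Lemma E_le (R : realType) n (d : R) (X Y : {ffun 'I_n -> bool} -> R) :
  0 <= d -> d <= 1 -> (forall w, X w <= Y w) -> bern_expect d X <= bern_expect d Y.
Proof.
move=> d0 d1 h; apply: ler_sum => w _; apply: ler_wpM2l; last exact: h.
exact: bern_prob_ge0.
Qed.

Definition Nsum (R : realType) n (w : {ffun 'I_n -> bool}) : R := \sum_(j < n) delta_rv w j.

Lemma Nsum_fcons (R : realType) n b (f : {ffun 'I_n -> bool}) :
  Nsum R (fcons b f) = b%:R + Nsum R f.
Proof.
rewrite /Nsum big_ord_recl /delta_rv fcons0; congr (_ + _).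
by apply: eq_bigr => j _; rewrite fconsS.
Qed.

Lemma Nsum_ge0 (R : realType) n (w : {ffun 'I_n -> bool}) : 0 <= Nsum R w.
Proof. by apply: sumr_ge0 => j _; rewrite /delta_rv ler0n. Qed.

Lemma E_N (R : realType) n (d : R) : bern_expect d (Nsum R (n := n)) = d * n%:R.
Proof.
elim: n => [|n IH].
  rewrite (E_ext _ (fun _ => 0)); first by rewrite E_const mulr0.
  by move=> w; rewrite /Nsum big_ord0.
rewrite bern_expectS.
rewrite (E_ext (fun f => Nsum R (fcons true f)) (fun f => 1 + Nsum R f));
  last by move=> f; rewrite Nsum_fcons.
rewrite (E_ext (fun f => Nsum R (fcons false f)) (fun f => Nsum R f));
  last by move=> f; rewrite Nsum_fcons add0r.
rewrite E_add E_const IH -natr1; ring.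
Qed.

Lemma E_expN (R : realType) n (d : R) :
  bern_expect d (fun w => expR (- Nsum R (n := n) w)) = (1 - d + d * expR (-1)) ^+ n.
Proof.
elim: n => [|n IH].
  rewrite (E_ext _ (fun _ => 1)); first by rewrite E_const expr0.
  by move=> w; rewrite /Nsum big_ord0 oppr0 expR0.
rewrite bern_expectS.
rewrite (E_ext (fun f => expR (- Nsum R (fcons true f))) (fun f => expR (-1) * expR (- Nsum R f)));
  last by move=> f; rewrite Nsum_fcons opprD expRD.
rewrite (E_ext (fun f => expR (- Nsum R (fcons false f))) (fun f => expR (- Nsum R f)));
  last by move=> f; rewrite Nsum_fcons add0r.
rewrite E_scale IH exprS; ring.
Qed.

Definition G (R : realType) n (d c : R) :=
  bern_expect (n := n) d (fun w => Num.sqrt (ln (c + Nsum R w))).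
Definition Mx (R : realType) n (a : nat -> R) (w : {ffun 'I_n -> bool}) :=
  \big[Num.max/0]_(j < n) (delta_rv w j * a j.+1).
Definition F (R : realType) n (d c : R) (a : nat -> R) :=
  bern_expect (n := n) d (fun w => Num.sqrt (ln (c + Nsum R w)) * Mx a w).
Definition dec (R : realType) n (a : nat -> R) :=
  (forall j k, (1 <= j)%N -> (j <= k)%N -> (k <= n)%N -> a k <= a j) /\ 0 <= a n.

Lemma dec_ge0 (R : realType) n (a : nat -> R) j :
  dec n a -> (1 <= j)%N -> (j <= n)%N -> 0 <= a j.
Proof. by move=> [h1 h2] j1 jn; apply: le_trans h2 (h1 _ _ j1 jn (leqnn n)). Qed.

Lemma dec_shift (R : realType) n (a : nat -> R) :
  dec n.+1 a -> dec n (fun k => a k.+1).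
Proof. by move=> [h1 h2]; split=> // j k j1 jk kn; apply: h1. Qed.

Lemma Mx_fcons (R : realType) n (a : nat -> R) b (f : {ffun 'I_n -> bool}) :
  Mx a (fcons b f) = Num.max (b%:R * a 1%N) (Mx (fun k => a k.+1) f).
Proof.
rewrite /Mx big_ord_recl /delta_rv fcons0; congr (Num.max _ _).
by apply: eq_bigr => j _; rewrite fconsS lift0.
Qed.

Lemma Mx_ge0 (R : realType) n (a : nat -> R) (w : {ffun 'I_n -> bool}) :
  dec n a -> 0 <= Mx a w.
Proof.
move=> ha; rewrite /Mx; apply: (big_ind (fun x => 0 <= x)) => //.
  by move=> x y hx hy; rewrite le_max hx.
move=> j _; apply: mulr_ge0; first by rewrite /delta_rv ler0n.
by apply: (dec_ge0 ha).
Qed.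

Lemma Mx_le (R : realType) n (a : nat -> R) (f : {ffun 'I_n -> bool}) :
  dec n.+1 a -> Mx (fun k => a k.+1) f <= a 1%N.
Proof.
move=> ha; rewrite /Mx; apply: bigmax_le; first exact: (dec_ge0 ha).
move=> j _; rewrite /delta_rv; case: (f j); rewrite ?mul1r ?mul0r.
  by apply: ha.1 => //; rewrite ltnS ltn_ord.
exact: (dec_ge0 ha).
Qed.

Lemma F_S (R : realType) n (d c : R) (a : nat -> R) :
  dec n.+1 a ->
  F n.+1 d c a = d * a 1%N * G n d (c + 1) + (1 - d) * F n d c (fun k => a k.+1).
Proof.
move=> ha; rewrite /F bern_expectS.
rewrite (E_ext (fun f => Num.sqrt (ln (c + Nsum R (fcons true f))) * Mx a (fcons true f))
               (fun f => a 1%N * Num.sqrt (ln ((c + 1) + Nsum R f)))); last first.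
  move=> f; rewrite Mx_fcons Nsum_fcons mul1r max_l; last exact: Mx_le.
  by rewrite addrA mulrC.
rewrite (E_ext (fun f => Num.sqrt (ln (c + Nsum R (fcons false f))) * Mx a (fcons false f))
               (fun f => Num.sqrt (ln (c + Nsum R f)) * Mx (fun k => a k.+1) f)); last first.
  move=> f; rewrite Mx_fcons Nsum_fcons mul0r add0r max_r //.
  exact: Mx_ge0 (dec_shift ha).
by rewrite E_scale /G mulrA.
Qed.

Lemma F_closed (R : realType) n (d c : R) (a : nat -> R) :
  dec n a ->
  F n d c a = \sum_(j < n) d * (1 - d) ^+ j * a j.+1 * G (n - j.+1) d (c + 1).
Proof.
elim: n a => [|n IH] a ha.
  rewrite big_ord0 /F (E_ext _ (fun _ => 0)); first by rewrite E_const.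
  by move=> w; rewrite /Mx big_ord0 mulr0.
rewrite F_S // IH; last exact: dec_shift.
rewrite big_ord_recl /= expr0 mulr1 subn1 /=; congr (_ + _).
rewrite mulr_sumr; apply: eq_bigr => j _.
by rewrite subSS exprS; ring.
Qed.

Lemma ln_le_sub1 (R : realType) (x : R) : 0 < x -> ln x <= x - 1.
Proof.
move=> x0; have := expR_ge1Dx (ln x); rewrite lnK ?posrE //; lra.
Qed.

Lemma sqrt_ln_tangent (R : realType) (y y0 : R) : 1 <= y -> 1 < y0 ->
  Num.sqrt (ln y) <= (2 * ln y0 + y / y0 - 1) / (2 * Num.sqrt (ln y0)).
Proof.
move=> y1 y01.
have L0 : 0 < ln y0 by apply: ln_gt0.
have t0 : 0 < Num.sqrt (ln y0) by rewrite sqrtr_gt0.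
have s0 : 0 <= Num.sqrt (ln y) := sqrtr_ge0 _.
have hs : Num.sqrt (ln y) ^+ 2 = ln y by rewrite sqr_sqrtr // ln_ge0.
have ht : Num.sqrt (ln y0) ^+ 2 = ln y0 by rewrite sqr_sqrtr // ltW.
have hd : ln y - ln y0 <= y / y0 - 1.
  rewrite -ln_div ?posrE; [|lra|lra]; apply: ln_le_sub1.
  apply: divr_gt0; lra.
rewrite ler_pdivlMr; last by rewrite mulr_gt0.
set s := Num.sqrt (ln y) in s0 hs *; set t := Num.sqrt (ln y0) in t0 ht *.
rewrite -hs -ht in hd *.
have := sqr_ge0 (s - t); rewrite !expr2 in hd * => h.
nra.
Qed.

Lemma G_ge0 (R : realType) n (d c : R) : 0 <= d -> d <= 1 -> 0 <= G n d c.
Proof.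
move=> d0 d1; rewrite -(@E_const R n d 0); apply: E_le => // w.
Qed.

Lemma G_upper (R : realType) n (d c : R) : 0 <= d -> d <= 1 -> 2 <= c ->
  G n d c <= Num.sqrt (ln (c + d * n%:R)).
Proof.
move=> d0 d1 c2.
have hy0 : 1 < c + d * n%:R by have := mulr_ge0 d0 (ler0n R n); lra.
have L0 : 0 < ln (c + d * n%:R) by apply: ln_gt0.
have t0 : 0 < Num.sqrt (ln (c + d * n%:R)) by rewrite sqrtr_gt0.
have ht : Num.sqrt (ln (c + d * n%:R)) ^+ 2 = ln (c + d * n%:R) by rewrite sqr_sqrtr // ltW.
have hp := fun (w : {ffun 'I_n -> bool}) (h : 1 <= c + Nsum R w) => @sqrt_ln_tangent R _ _ h hy0.
set y0 := c + d * n%:R in hy0 L0 t0 ht hp *.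
have hy : y0 = c + d * n%:R by [].
clearbody y0.
move: L0 t0 ht hp; move: (ln y0) => L L0.
move: (Num.sqrt L) => t t0 ht hp.
apply: (@le_trans _ _ (bern_expect d (fun w => (2 * L + c / y0 - 1) / (2 * t)
     + (y0 * (2 * t))^-1 * Nsum R w))).
  apply: E_le => // w.
  apply: le_trans (hp w _) _.
    by have := Nsum_ge0 R w; lra.
  rewrite le_eqVlt; apply/orP; left; apply/eqP; field.
  by rewrite (gt_eqF t0) gt_eqF //; lra.
rewrite E_add E_const E_scale E_N.
rewrite -ht le_eqVlt; apply/orP; left; apply/eqP.
rewrite ht.
have hL : L = t * t by rewrite -ht expr2.
rewrite hL hy; field.
by rewrite (gt_eqF t0) gt_eqF //; lra.
Qed.

Lemma inv_le_half (R : realType) (u : R) : 2 <= u -> u^-1 <= 1 / 2.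
Proof.
move=> u2; have u0 : u != 0 by rewrite gt_eqF //; lra.
have h := mulVf u0; have v0 : 0 < u^-1 by rewrite invr_gt0; lra.
move: h v0; move: (u^-1) => v h v0; nra.
Qed.

Lemma expR1_ge2 (R : realType) : 2 <= expR (1 : R).
Proof. by have := expR_ge1Dx (1 : R); lra. Qed.

Lemma G_ge1 (R : realType) n (d : R) : 0 <= d -> d <= 1 -> 1 <= G n d (expR 1 + 1).
Proof.
move=> d0 d1.
have hpt : forall w : {ffun 'I_n -> bool}, 1 <= Num.sqrt (ln (expR 1 + 1 + Nsum R w)).
  move=> w; have N0 := Nsum_ge0 R w; have e2 := expR1_ge2 R.
  have h1 : 1 <= ln (expR 1 + 1 + Nsum R w).
    rewrite -[X in X <= _](expRK (1 : R)) ler_ln ?posrE ?expR_gt0 //; lra.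
  by rewrite -{1}sqrtr1 ler_sqrt //; lra.
have := E_le d0 d1 hpt; rewrite E_const; exact.
Qed.

Lemma G_lower2 (R : realType) k (d : R) : 0 <= d -> d <= 1 -> 4 <= d * k%:R ->
  Num.sqrt (ln (expR 1 + 1 + d * k%:R / 4)) / 2 <= G k d (expR 1 + 1).
Proof.
move=> d0 d1 mu4.
set mu := d * k%:R in mu4 *.
set A := Num.sqrt (ln (expR 1 + 1 + mu / 4)).
have A0 : 0 <= A := sqrtr_ge0 _.
set K := expR (mu / 4).
have e2 := expR1_ge2 R.
have hpt : forall w : {ffun 'I_k -> bool},
    A + (- (A * K)) * expR (- Nsum R w) <= Num.sqrt (ln (expR 1 + 1 + Nsum R w)).
  move=> w; have N0 := Nsum_ge0 R w.
  have E0 : 0 < expR (- Nsum R w) := expR_gt0 _.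
  have K0 : 0 < K := expR_gt0 _.
  have S0 := sqrtr_ge0 (ln (expR 1 + 1 + Nsum R w)).
  have [hle|hlt] := leP 1 (K * expR (- Nsum R w)).
    nra.
  have hN : mu / 4 <= Nsum R w.
    move: hlt; rewrite /K -expRD expR_lt1; lra.
  have hA : A <= Num.sqrt (ln (expR 1 + 1 + Nsum R w)).
    apply: ler_wsqrtr; rewrite ler_ln ?posrE; lra.
  have : 0 <= A * K * expR (- Nsum R w) by rewrite mulr_ge0 // mulr_ge0 // ltW.
  lra.
apply: le_trans (E_le d0 d1 hpt).
rewrite E_add E_const E_scale E_expN.
set r := 1 - d + d * expR (-1).
have hr0 : 0 <= r.
  rewrite /r; have := expR_gt0 (-1 : R); nra.
have hr1 : r <= expR (- (d / 2)).
  apply: le_trans (expR_ge1Dx _).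
  have : expR (-1) <= 1 / 2 :> R by rewrite expRN; apply: inv_le_half.
  rewrite /r; nra.
have hrk : r ^+ k <= expR (- (d / 2) * k%:R).
  rewrite expRM_natr; apply: lerXn2r => //; rewrite nnegrE //; exact: ltW (expR_gt0 _).
have hKe : K * expR (- (d / 2) * k%:R) <= 1 / 2.
  rewrite /K -expRD.
  have -> : mu / 4 + - (d / 2) * k%:R = - (mu / 4) by rewrite /mu; field.
  rewrite expRN; apply: inv_le_half.
  by apply: le_trans (expR_ge1Dx _); lra.
have K0 : 0 < K := expR_gt0 _.
have : K * r ^+ k <= 1 / 2.
  apply: le_trans hKe; apply: ler_wpM2l; [exact: ltW|exact: hrk].
move: (r ^+ k) => z hz.
nra.
Qed.

Lemma expR1_le4 (R : realType) : expR (1 : R) <= 4.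
Proof.
have h1 : (1 : R) = 1 / 2 + 1 / 2 by field.
have hp := expRxMexpNx_1 (1 / 2 : R).
have hn := expR_ge1Dx (- (1 / 2) : R).
have h0 := expR_gt0 (1 / 2 : R).
have h2 : expR (1 / 2 : R) <= 2 by nra.
rewrite h1 expRD; nra.
Qed.

Lemma sqrt_le_2 (R : realType) (u v : R) : 0 <= v -> u <= 4 * v ->
  Num.sqrt u <= 2 * Num.sqrt v.
Proof.
move=> v0 h.
have -> : 2 * Num.sqrt v = Num.sqrt (4 * v).
  rewrite sqrtrM; last lra.
  have -> : (4 : R) = 2 ^+ 2 by rewrite expr2; lra.
  by rewrite sqrtr_sqr ger0_norm.
exact: ler_wsqrtr.
Qed.

Lemma sum_ord_split (R : realType) n m (f : nat -> R) : (m <= n)%N ->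
  \sum_(j < n) f j = \sum_(j < m) f j + \sum_(m <= j < n) f j.
Proof.
by move=> mn; rewrite -!(big_mkord xpredT) (big_cat_nat (leq0n m) mn).
Qed.

Lemma S_shift (R : realType) m (a : nat -> R) :
  \sum_(1 <= j < m.+1) a j = \sum_(j < m) a j.+1.
Proof. by rewrite big_add1 /= big_mkord. Qed.

Lemma qpow_upper (R : realType) (d : R) m : 0 < d -> d <= 1 -> d * m%:R = 1 ->
  (1 - d) ^+ m <= 1 / 2.
Proof.
move=> d0 d1 hm.
apply: (@le_trans _ _ (expR (- d) ^+ m)).
  apply: lerXn2r; rewrite ?nnegrE; [lra| exact: ltW (expR_gt0 _)|].
  by have := expR_ge1Dx (- d); lra.
rewrite -expRM_natr mulNr hm expRN; apply: inv_le_half; exact: expR1_ge2.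
Qed.

Lemma qpow_lower (R : realType) (d : R) m j : 0 < d -> d <= 1 -> d * m%:R = 1 ->
  (j < m)%N -> expR (-1) <= (1 - d) ^+ j.
Proof.
move=> d0 d1 hm jm.
case: m hm jm => [|[|m]] hm jm //.
  move: jm; rewrite ltnS leqn0 => /eqP ->; rewrite expr0.
  by rewrite expR_le1; lra.
have hm2 : (2 : R) <= m.+2%:R by rewrite ler_nat.
have dh : d <= 1 / 2 by nra.
set q := 1 - d.
have q0 : 0 < q by rewrite /q; lra.
apply: (@le_trans _ _ (q ^+ m.+1)); last first.
  apply: ler_wiXn2l; [exact: ltW|rewrite /q; lra|by rewrite -ltnS].
have hq : expR (- (d / q)) <= q.
  have hp := expRxMexpNx_1 (d / q).
  have he := expR_ge1Dx (d / q).
  have hqd : q * (1 + d / q) = 1 by rewrite /q; field; rewrite /q; lra.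
  have hn := expR_gt0 (- (d / q)).
  have hpos := expR_gt0 (d / q).
  nra.
apply: (@le_trans _ _ (expR (- (d / q)) ^+ m.+1)); last first.
  by apply: lerXn2r; rewrite ?nnegrE // ltW.
rewrite -expRM_natr le_eqVlt; apply/orP; left; apply/eqP; congr expR.
have : d * m.+1%:R = q by move: hm; rewrite /q -natr1 => hm'; lra.
move=> h; rewrite mulNr mulrAC h mulfV ?gt_eqF //.
Qed.

Lemma T_le (R : realType) n m (d : R) (a : nat -> R) : dec n a -> (m <= n)%N ->
  0 <= d -> d <= 1 -> (1 - d) ^+ m <= 1 / 2 ->
  \sum_(j < n) (1 - d) ^+ j * a j.+1 <= 2 * \sum_(j < m) a j.+1.
Proof.
move=> ha mn d0 d1 hq.
set q := 1 - d in hq *.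
have q0 : 0 <= q by rewrite /q; lra.
have q1 : q <= 1 by rewrite /q; lra.
have ha0 : forall j, (j < n)%N -> 0 <= a j.+1 by move=> j jn; apply: (dec_ge0 ha).
set T := \sum_(j < n) q ^+ j * a j.+1.
have T0 : 0 <= T by apply: sumr_ge0 => j _; rewrite mulr_ge0 ?exprn_ge0 ?ha0.
have h1 : \sum_(j < m) q ^+ j * a j.+1 <= \sum_(j < m) a j.+1.
  apply: ler_sum => j _.
  have aj : 0 <= a j.+1 by apply: ha0; apply: leq_trans (ltn_ord j) mn.
  have := exprn_ile1 j q0 q1; have := exprn_ge0 j q0; nra.
have h2 : \sum_(m <= j < n) q ^+ j * a j.+1 <= q ^+ m * T.
  rewrite -{1}(add0n m) big_addn.
  apply: (@le_trans _ _ (\sum_(0 <= i < n - m) q ^+ m * (q ^+ i * a i.+1))).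
    apply: ler_sum_nat => i /andP [_ hi].
    rewrite exprD mulrC [q ^+ m * _]mulrC -!mulrA.
    have -> : q ^+ i * (a i.+1 * q ^+ m) = a i.+1 * (q ^+ i * q ^+ m) by ring.
    apply: ler_wpM2r; first by rewrite mulr_ge0 ?exprn_ge0.
    apply: ha.1 => //; first by rewrite ltnS leq_addr.
    by move: hi mn; clear; lia.
  rewrite -mulr_sumr; apply: ler_wpM2l; first exact: exprn_ge0.
  rewrite big_mkord /T (@sum_ord_split R n (n - m) (fun j => q ^+ j * a j.+1) (leq_subr m n)) /=.
  rewrite lerDl big_nat_cond; apply: sumr_ge0 => i /andP [/andP [_ hi] _].
  by rewrite mulr_ge0 ?exprn_ge0 ?ha0.
have hT : T = \sum_(j < m) q ^+ j * a j.+1 + \sum_(m <= j < n) q ^+ j * a j.+1.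
  exact: sum_ord_split.
have hm0 := exprn_ge0 m q0.
nra.
Qed.

Lemma sqrt4 (R : realType) : Num.sqrt (4 : R) = 2.
Proof.
have -> : (4 : R) = 2 ^+ 2 by rewrite expr2; lra.
by rewrite sqrtr_sqr ger0_norm.
Qed.

Lemma four_ln (R : realType) (y : R) : 0 < y -> 4 * ln y = ln (y ^+ 4).
Proof. by move=> y0; rewrite lnXn // mulr_natl. Qed.

Lemma G_low (R : realType) n m k (d : R) : 0 < d -> d <= 1 -> d * m%:R = 1 ->
  (m <= n)%N -> (n - m <= k)%N -> 2 < d * n%:R ->
  Num.sqrt (ln (d * n%:R)) / 4 <= G k d (expR 1 + 1).
Proof.
move=> d0 d1 hm mn hk hx.
have e2 := expR1_ge2 R.
have hkx : d * n%:R - 1 <= d * k%:R.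
  have : (n - m)%:R <= k%:R :> R by rewrite ler_nat.
  rewrite natrB // => h; nra.
move: hkx hx; set x := d * n%:R => hkx hx.
have x0 : 0 < x by lra.
have lx0 : 0 <= ln x by apply: ln_ge0; lra.
have [x5|x5] := leP x 5.
  apply: le_trans (G_ge1 k (ltW d0) d1).
  have : Num.sqrt (ln x) <= 2 * Num.sqrt 4.
    apply: sqrt_le_2; first lra.
    have := ln_le_sub1 x0; lra.
  rewrite sqrt4; lra.
have mu4 : 4 <= d * k%:R by lra.
apply: le_trans (G_lower2 (ltW d0) d1 mu4).
move: mu4 hkx; move: (d * k%:R) => mu mu4 hkx.
set y := expR 1 + 1 + mu / 4.
have y1 : 1 + mu / 4 <= y by rewrite /y; lra.
have y0 : 0 < y by lra.
have hy2 : 1 + mu / 2 <= y ^+ 2 by rewrite expr2; nra.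
have hy4 : 1 + mu <= y ^+ 4.
  have -> : y ^+ 4 = y ^+ 2 * y ^+ 2 by rewrite -exprD.
  nra.
have hl : ln x <= 4 * ln y.
  rewrite four_ln // ler_ln ?posrE //; [lra|exact: exprn_gt0].
have h := sqrt_le_2 (ln_ge0 (ltW (lt_le_trans _ y1))) hl.
have : 1 < 1 + mu / 4 by lra.
move=> /h; lra.
Qed.

Lemma mono4 (R : realType) (d u u' a v v' : R) : 0 <= d -> 0 <= a -> 0 <= u ->
  u <= u' -> 0 <= v -> v <= v' -> d * u * a * v <= d * u' * a * v'.
Proof.
move=> d0 a0 u0 uu v0 vv.
have h : u * v <= u' * v' by apply: ler_pM.
have -> : d * u * a * v = (d * a) * (u * v) by ring.
have -> : d * u' * a * v' = (d * a) * (u' * v') by ring.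
by apply: ler_wpM2l => //; apply: mulr_ge0.
Qed.

Theorem lemma5p1 (R : realType) (n : nat) (a : nat -> R) (d : R) (m : nat)
  (ha_mono : forall j k : nat, (1 <= j)%N -> (j <= k)%N -> (k <= n)%N -> a k <= a j)
  (ha_nonneg : 0 <= a n)
  (hd_low : 2 / n%:R < d) (hd_up : d <= 1)
  (hm : d^-1 = m%:R) :
  let nd := fun w : {ffun 'I_n -> bool} => expR 1 + \sum_(j < n) delta_rv w j in
  let S := \sum_(1 <= j < m.+1) a j in
  let E := bern_expect d (fun w => Num.sqrt (ln (nd w)) *
             \big[Num.max/0]_(j < n) (delta_rv w j * a j.+1)) in
  d / (4 * expR 1) * Num.sqrt (ln (d * n%:R)) * S <= E /\
  E <= 4 * d * Num.sqrt (ln (d * n%:R)) * S.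
Proof.
move=> nd S E.
have hE : E = F n d (expR 1) a by [].
have hS : S = \sum_(j < m) a j.+1 by exact: S_shift.
have ha : dec n a by [].
rewrite hE hS; clear hE hS E S nd.
have e2 := expR1_ge2 R.
have e4 := expR1_le4 R.
have d0 : 0 < d.
  apply: le_lt_trans hd_low; apply: divr_ge0; [lra|exact: ler0n].
have dm : d * m%:R = 1 by rewrite -hm mulfV // gt_eqF.
rewrite F_closed //.
case: (posnP n) => [n0|npos].
  subst n; rewrite big_ord0 mulr0 ln0 // sqrtr0; lra.
have hx : 2 < d * n%:R by rewrite -ltr_pdivrMr // ltr0n.
have mn : (m <= n)%N.
  rewrite -(ler_nat R); have : 0 <= m%:R :> R by exact: ler0n. nra.
have q0 : 0 <= 1 - d by lra.
have ha0 : forall j, (j < n)%N -> 0 <= a j.+1 by move=> j jn; apply: (dec_ge0 ha).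
have hS0 : 0 <= \sum_(j < m) a j.+1.
  by apply: sumr_ge0 => j _; apply: ha0; apply: leq_trans (ltn_ord j) mn.
set x := d * n%:R in hx *.
have lx0 : 0 <= Num.sqrt (ln x) := sqrtr_ge0 _.
split.
  rewrite (@sum_ord_split R n m (fun j => d * (1 - d) ^+ j * a j.+1 * G (n - j.+1) d (expR 1 + 1)) mn) /=.
  rewrite -[X in X <= _]addr0; apply: lerD; last first.
    rewrite big_nat_cond; apply: sumr_ge0 => i /andP [/andP [_ hi] _].
    by rewrite !mulr_ge0 ?G_ge0 ?exprn_ge0 ?(ha0 _ hi) ?(ltW d0).
  apply: (@le_trans _ _ (\sum_(j < m) d * expR (-1) * a j.+1 * (Num.sqrt (ln x) / 4))).
    rewrite mulr_sumr le_eqVlt; apply/orP; left; apply/eqP; apply: eq_bigr => j _.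
    rewrite expRN; field; rewrite gt_eqF //; lra.
  apply: ler_sum => j _.
  apply: mono4; [lra| apply: ha0; apply: leq_trans (ltn_ord j) mn
    | exact: ltW (expR_gt0 _) | exact: (qpow_lower d0 hd_up dm (ltn_ord j)) | lra | ].
  apply: (G_low (m := m)) => //; exact: leq_sub2l.
set B := Num.sqrt (ln (expR 1 + 1 + x)).
have B0 : 0 <= B := sqrtr_ge0 _.
have hG : forall j : 'I_n, G (n - j.+1) d (expR 1 + 1) <= B.
  move=> j; apply: le_trans (G_upper _ (ltW d0) hd_up _) _; first lra.
  apply: ler_wsqrtr; rewrite ler_ln ?posrE; last first.
  - have := mulr_ge0 (ltW d0) (ler0n R (n - j.+1)); lra.
  - have := mulr_ge0 (ltW d0) (ler0n R (n - j.+1)); lra.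
  - rewrite lerD2l /x; apply: ler_wpM2l; first exact: ltW.
    by rewrite ler_nat leq_subr.
set T := \sum_(j < n) (1 - d) ^+ j * a j.+1.
have T0 : 0 <= T by apply: sumr_ge0 => j _; rewrite mulr_ge0 ?exprn_ge0 ?ha0.
have h1 : \sum_(j < n) d * (1 - d) ^+ j * a j.+1 * G (n - j.+1) d (expR 1 + 1) <= d * B * T.
  rewrite /T mulr_sumr; apply: ler_sum => j _.
  have -> : d * B * ((1 - d) ^+ j * a j.+1) = d * (1 - d) ^+ j * a j.+1 * B by ring.
  apply: ler_wpM2l; last exact: hG.
  by rewrite !mulr_ge0 ?exprn_ge0 ?ha0 ?(ltW d0).
have hT := T_le ha mn (ltW d0) hd_up (qpow_upper d0 hd_up dm).
have hB : B <= 2 * Num.sqrt (ln x).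
  apply: sqrt_le_2; first by apply: ln_ge0; lra.
  rewrite four_ln; last lra.
  rewrite ler_ln ?posrE; [|lra|apply: exprn_gt0; lra].
  have hx2 : 4 <= x ^+ 2 by rewrite expr2; nra.
  have -> : x ^+ 4 = x ^+ 2 * x ^+ 2 by rewrite -exprD.
  nra.
apply: le_trans h1 _.
have : d * B * T <= d * B * (2 * \sum_(j < m) a j.+1).
  by apply: ler_wpM2l => //; rewrite mulr_ge0 // ltW.
have : d * B * (2 * \sum_(j < m) a j.+1) <= d * (2 * Num.sqrt (ln x)) * (2 * \sum_(j < m) a j.+1).
  apply: ler_wpM2r; first by rewrite mulr_ge0.
  by apply: ler_wpM2l => //; exact: ltW.
lra.
Qed.
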